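(* Let $\gamma,\kappa\ge 2$, memory $m\ge 0$, coupling length $L\ge m+1$ and lifting degree $Z\ge1$, and consider a random QC-SC-LDPC code built from the $\gamma\times\kappa$ fully-connected base graph with uniform edge-spreading over $\{0,1,\ldots,m\}$ and uniform random lifting. Let $\Delta=(2\gamma-3)(2\kappa-3)$ and $$I=\frac{(\Delta-1)^{\Delta-1}}{\Delta^{\Delta}},\qquad II=\frac{27}{256(\gamma\kappa-\gamma-\kappa)}.$$ If $$\frac{2m^2+4m+3}{3(m+1)^3Z}\le\max\{I,II\},$$ then the probability that no 4-cycle candidate $c_4\in\mathcal{C}_4$ is active satisfies $$P\Big(\bigcap_{c_4\in\mathcal{C}_4}\overline{c_4}\Big)\ge\begin{cases}\left(1-\frac{2}{\Delta}\right)^{\frac{\gamma(\gamma-1)\kappa(\kappa-1)\Delta}{8}}, & \text{if } I>II,\\[2pt] \left(1-\frac{\gamma\kappa-\gamma-\kappa+1}{4(\gamma\kappa-\gamma-\kappa)}\right)^{\gamma\kappa}, & \text{otherwise,}\end{cases}$$ and in particular (this probability being positive) there exists such a QC-SC-LDPC code whose Tanner graph has girth at least 6.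
   Context: The base graph is the complete bipartite graph with check nodes $[\gamma]$, variable nodes $[\kappa]$ and edges $[\gamma]\times[\kappa]$ (all-one base matrix, no parallel edges). The code is determined by a partition matrix $\mathbf{P}\in\{0,\ldots,m\}^{\gamma\times\kappa}$ (edge $(i,j)$ goes to component matrix $\mathbf{H}_{\mathbf{P}(i,j)}$; the protograph is formed by stacking $\mathbf{H}_0,\ldots,\mathbf{H}_m$ into a replica and coupling $L$ replicas) and a lifting matrix $\mathbf{L}\in\{0,\ldots,Z-1\}^{\gamma\times\kappa}$ (entry replaced by the circulant permutation matrix $\sigma^{\mathbf{L}(i,j)}$). Randomly, the entries of $\mathbf{P}$ are i.i.d. uniform on $\{0,\ldots,m\}$ and the entries of $\mathbf{L}$ are i.i.d. uniform on $\{0,\ldots,Z-1\}$, independently. $\mathcal{C}_4$ is the set of 4-cycle candidates $(j_1,i_1,j_2,i_2)$ of the base graph (choice of two distinct rows $i_1,i_2$ and two distinct columns $j_1,j_2$); such a candidate is active iff $\mathbf{P}(i_1,j_1)+\mathbf{P}(i_2,j_2)=\mathbf{P}(i_1,j_2)+\mathbf{P}(i_2,j_1)$ and $\mathbf{L}(i_1,j_1)+\mathbf{L}(i_2,j_2)\equiv\mathbf{L}(i_1,j_2)+\mathbf{L}(i_2,j_1)\pmod Z$, and the Tanner graph has girth at least 6 iff no 4-cycle candidate is active. *)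

(* Defs.v *)
From HB Require Import structures.
From mathcomp Require Import all_boot all_order all_algebra.
From mathcomp Require Import all_classical all_reals all_analysis.
Set Implicit Arguments. Unset Strict Implicit. Unset Printing Implicit Defensive.
Import Order.TTheory GRing.Theory Num.Theory.

Definition partmx (g k m : nat) := {ffun 'I_g * 'I_k -> 'I_m.+1}.
Definition liftmx (g k Z : nat) := {ffun 'I_g * 'I_k -> 'I_Z}.

Definition active (g k m Z : nat) (P : partmx g k m) (Lf : liftmx g k Z)
  (j1 : 'I_k) (i1 : 'I_g) (j2 : 'I_k) (i2 : 'I_g) : bool :=
  [&& i1 != i2, j1 != j2,
      (P (i1, j1) + P (i2, j2) == P (i1, j2) + P (i2, j1))%N &
      (Lf (i1, j1) + Lf (i2, j2) == Lf (i1, j2) + Lf (i2, j1) %[mod Z])%N].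

Definition no_active (g k m Z : nat) (P : partmx g k m) (Lf : liftmx g k Z) : bool :=
  [forall j1, forall i1, forall j2, forall i2, ~~ active P Lf j1 i1 j2 i2].

(* Probability (uniform i.i.d. P and L, independent) that no candidate is active. *)
Definition prob_no_active (R : realType) (g k m Z : nat) : R :=
  #|[set PL : partmx g k m * liftmx g k Z | no_active PL.1 PL.2]|%:R
  / #|{: partmx g k m * liftmx g k Z}|%:R.

(* Tanner graph of the QC-SC-LDPC code with coupling length Lc:
   check nodes (r, i, z) : replica-row r < Lc + m, base row i, lift index z;
   variable nodes (t, j, w) : replica t < Lc, base column j, lift index w.
   Block (r, t) of the coupled protograph is H_{r-t} (0 if r - t not in [0, m]),
   H_l(i,j) = 1 iff P(i,j) = l; each 1 at base position (i,j) is replaced by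
   the circulant sigma^{L(i,j)} (row z has its 1 in column z + L(i,j) mod Z). *)
Definition tanner_edge (g k m Z Lc : nat) (P : partmx g k m) (Lf : liftmx g k Z)
  (c : 'I_(Lc + m) * 'I_g * 'I_Z) (v : 'I_Lc * 'I_k * 'I_Z) : bool :=
  let: (r, i, z) := c in
  let: (t, j, w) := v in
  [&& (t <= r)%N, (r - t == P (i, j))%N & (w == (z + Lf (i, j)) %% Z :> nat)].

(* Girth at least 6 of the (bipartite, simple) Tanner graph: no cycle of
   length 4, i.e. no two distinct check nodes adjacent to two distinct
   variable nodes. *)
Definition girth_ge6 (g k m Z Lc : nat) (P : partmx g k m) (Lf : liftmx g k Z) : Prop :=
  ~ exists (c1 c2 : 'I_(Lc + m) * 'I_g * 'I_Z) (v1 v2 : 'I_Lc * 'I_k * 'I_Z),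
      [/\ c1 != c2, v1 != v2,
          @tanner_edge g k m Z Lc P Lf c1 v1 && @tanner_edge g k m Z Lc P Lf c1 v2 &
          @tanner_edge g k m Z Lc P Lf c2 v1 && @tanner_edge g k m Z Lc P Lf c2 v2].

Definition Delta (g k : nat) : nat := ((2 * g - 3) * (2 * k - 3))%N.

Local Open Scope ring_scope.

Definition termI (R : realType) (g k : nat) : R :=
  ((Delta g k).-1)%:R ^+ (Delta g k).-1 / (Delta g k)%:R ^+ Delta g k.

Definition termII (R : realType) (g k : nat) : R :=
  27 / (256 * (g * k - g - k)%N%:R).

Definition lower_bound (R : realType) (g k : nat) : R :=
  if termII R g k < termI R g k then
    (1 - 2 / (Delta g k)%:R) `^ ((g * (g - 1) * k * (k - 1) * Delta g k)%N%:R / 8)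
  else
    (1 - (g * k - g - k + 1)%N%:R / (4 * (g * k - g - k)%N%:R)) ^+ (g * k).

(* Main.v *)
Require Import Defs.
From HB Require Import structures.
From mathcomp Require Import all_boot all_order all_algebra.
From mathcomp Require Import all_classical all_reals all_analysis.
From mathcomp Require Import ring lra zify.
Import Order.TTheory GRing.Theory Num.Theory.
Set Implicit Arguments. Unset Strict Implicit. Unset Printing Implicit Defensive.

Lemma core_step (F V : finType) (upd : F -> V -> F) (get : F -> V)
  (Hgu : forall f v, get (upd f v) = v) (Hug : forall f v, upd (upd f v) (get f) = f)
  (Q B : pred F) (b : nat)
  (HQ : forall f v, Q (upd f v) = Q f)
  (HB : forall f, #|[set v | B (upd f v)]| <= b) :
  (#|V| - b) * #|[set f | Q f]| <= #|V| * #|[set f | Q f && ~~ B f]|.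
Proof.
set X := [set x : F * V | Q x.1 && ~~ B (upd x.1 x.2)].
have h1 : (#|V| - b) * #|[set f | Q f]| <= #|X|.
  have -> : #|X| = \sum_(f : F) #|[set v | Q f && ~~ B (upd f v)]|.
    rewrite -sum1_card big_mkcond /= (eq_bigr (fun p => if (p.1, p.2) \in X then 1 else 0)); last by case.
    rewrite -(pair_bigA _ (fun f v => if (f, v) \in X then 1 else 0)) /=.
    apply: eq_bigr => f _; rewrite -sum1_card [RHS]big_mkcond /=.
    by apply: eq_bigr => v _; rewrite !inE.
  rewrite mulnC -sum_nat_const (big_mkcond (fun f => f \in _)) /=.
  apply: leq_sum => f _; rewrite inE; case Qf: (Q f) => //=.
  have := cardsC [set v | B (upd f v)].
  have := HB f.
  have -> : ~: [set v | B (upd f v)] = [set v | ~~ B (upd f v)] by apply/setP => v; rewrite !inE.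
  move=> h e; rewrite -e; lia.
have h2 : #|X| <= #|V| * #|[set f | Q f && ~~ B f]|.
  pose phi (x : F * V) := (upd x.1 x.2, get x.1).
  have phi_inj : injective phi.
    move=> [f1 v1] [f2 v2] [e1 e2].
    have ef : f1 = f2 by rewrite -(Hug f1 v1) -(Hug f2 v2) e1 e2.
    by rewrite ef; congr pair; rewrite -(Hgu f1 v1) e1 Hgu.
  rewrite -(card_imset X phi_inj) mulnC -(cardsT V) -cardsX.
  apply: subset_leq_card; apply/fintype.subsetP => y /imsetP [[f v] Hx ->].
  by rewrite !inE /= HQ andbT; move: Hx; rewrite inE.
exact: leq_trans h1 h2.
Qed.


Lemma greedy (T F V : finType) (rk : T -> nat) (rk_inj : injective rk)
  (upd : T -> F -> V -> F) (get : T -> F -> V)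
  (Hgu : forall p f v, get p (upd p f v) = v)
  (Hug : forall p f v, upd p (upd p f v) (get p f) = f)
  (bad : T -> pred F) (b : T -> nat)
  (Hloc : forall p q f v, rk q < rk p -> bad q (upd p f v) = bad q f)
  (HB : forall p f, #|[set v | bad p (upd p f v)]| <= b p) :
  (\prod_p (#|V| - b p)) * #|F| <= #|V| ^ #|T| * #|[set f | [forall p, ~~ bad p f]]|.
Proof.
have claim : forall n, (\prod_(p | rk p < n) (#|V| - b p)) * #|F| <=
   #|V| ^ #|[set p | rk p < n]| * #|[set f | [forall p, (rk p < n) ==> ~~ bad p f]]|.
  elim=> [|n IH].
    rewrite big_pred0 // mul1n.
    have -> : [set p | rk p < 0] = finset.set0 by apply/setP => p; rewrite !inE.
    rewrite cards0 expn0 mul1n -(cardsT F); apply: subset_leq_card.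
    by apply/fintype.subsetP => f _; rewrite inE; apply/forallP.
  case: (pickP (fun p => rk p == n)) => [p /eqP Hp | Hnone].
    rewrite (bigD1 p) /=; last by rewrite Hp.
    rewrite (eq_bigl (fun q => rk q < n)); last first.
      move=> q; have e : (q == p) = (rk q == n).
        by apply/eqP/eqP => [->//|h]; apply: rk_inj; rewrite h Hp.
      rewrite e; lia.
    have -> : [set q | rk q < n.+1] = p |: [set q | rk q < n].
      apply/setP => q; rewrite !inE; have e : (q == p) = (rk q == n).
        by apply/eqP/eqP => [->//|h]; apply: rk_inj; rewrite h Hp.
      rewrite e; lia.
    rewrite cardsU1 inE Hp ltnn add1n expnS.
    have -> : [set f | [forall q, (rk q < n.+1) ==> ~~ bad q f]] =
              [set f | [forall q, (rk q < n) ==> ~~ bad q f] && ~~ bad p f].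
      apply/setP => f; rewrite !inE; apply/forallP/andP.
        move=> H; split; last by have := H p; rewrite Hp ltnSn.
        by apply/forallP => q; apply/implyP => h; have := H q; rewrite ltnS ltnW.
      move=> [/forallP H1 H2] q; apply/implyP; rewrite ltnS leq_eqVlt => /orP [/eqP e|h].
        by rewrite -Hp in e; rewrite (rk_inj _ _ e).
      by have /implyP := H1 q; apply.
    have HQ : forall f v, [forall q, (rk q < n) ==> ~~ bad q (upd p f v)] =
                          [forall q, (rk q < n) ==> ~~ bad q f].
      move=> f v; apply: eq_forallb => q; case: (ltnP (rk q) n) => //= h.
      by rewrite Hloc // Hp.
    have core := @core_step F V (upd p) (get p) (Hgu p) (Hug p)
       (fun f => [forall q, (rk q < n) ==> ~~ bad q f]) (bad p) (b p) HQ (HB p).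
    move: IH core; set P := \prod_(_ | _) _; set c := #|_|; set G0 := #|_|; set G1 := #|_|.
    move=> IH core.
    rewrite -mulnA (leq_trans (leq_mul (leqnn _) IH)) // mulnCA -mulnA.
    by rewrite [X in _ <= X]mulnCA; apply: leq_mul (leqnn _) core.
  have e : forall q, (rk q < n.+1) = (rk q < n).
    by move=> q; have /= hq := Hnone q; rewrite ltnS leq_eqVlt hq.
  rewrite (eq_bigl _ _ e).
  have -> : [set p | rk p < n.+1] = [set p | rk p < n] by apply/setP => q; rewrite !inE e.
  have -> : [set f | [forall p, (rk p < n.+1) ==> ~~ bad p f]] =
            [set f | [forall p, (rk p < n) ==> ~~ bad p f]].
    by apply/setP => f; rewrite !inE; apply: eq_forallb => q; rewrite e.
  exact: IH.
set N := (\max_p rk p).+1.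
have hN : forall p, rk p < N by move=> p; rewrite ltnS leq_bigmax.
have := claim N.
rewrite (eq_bigl _ _ (fun p => hN p)).
have -> : [set p | rk p < N] = [set: _] by apply/setP => p; rewrite !inE hN.
have -> : [set f | [forall p, (rk p < N) ==> ~~ bad p f]] = [set f | [forall p, ~~ bad p f]].
  by apply/setP => f; rewrite !inE; apply: eq_forallb => q; rewrite hN.
by rewrite cardsT.
Qed.


Definition Fty g k m Z := (partmx g k m * liftmx g k Z)%type.

Definition act g k m Z (f : Fty g k m Z) (i1 : 'I_g) (j1 : 'I_k) (i2 : 'I_g) (j2 : 'I_k) : bool :=
  ((f.1 (i1,j1) + f.1 (i2,j2) == f.1 (i1,j2) + f.1 (i2,j1))%N &&
   (f.2 (i1,j1) + f.2 (i2,j2) == f.2 (i1,j2) + f.2 (i2,j1) %[mod Z])%N).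

Definition bad g k m Z (p : 'I_g * 'I_k) (f : Fty g k m Z) : bool :=
  [exists i' : 'I_g, exists j' : 'I_k, [&& i' < p.1, j' < p.2 & act f i' j' p.1 p.2]].

Definition updF g k m Z (p : 'I_g * 'I_k) (f : Fty g k m Z) (v : 'I_m.+1 * 'I_Z) : Fty g k m Z :=
  ([ffun q => if q == p then v.1 else f.1 q], [ffun q => if q == p then v.2 else f.2 q]).

Definition getF g k m Z (p : 'I_g * 'I_k) (f : Fty g k m Z) : 'I_m.+1 * 'I_Z := (f.1 p, f.2 p).

Definition rk g k (p : 'I_g * 'I_k) : nat := p.1 * k + p.2.

Lemma rk_inj g k : injective (@rk g k).
Proof.
move=> [a b] [c d]; rewrite /rk /= => e.
have kp : 0 < k by case: k b {e d} => [[]|].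
have e1 : a = c :> nat.
  by have := congr1 (fun x => x %/ k) e; rewrite /= !divnMDl // !divn_small // !addn0.
have e2 : b = d :> nat.
  by have := congr1 (fun x => x %% k) e; rewrite /= !modnMDl // !modn_small.
by congr pair; apply: val_inj.
Qed.

Lemma getF_upd g k m Z p (f : Fty g k m Z) v : getF p (updF p f v) = v.
Proof. by case: v => a l; rewrite /getF /updF /= !ffunE eqxx. Qed.

Lemma updF_get g k m Z p (f : Fty g k m Z) v : updF p (updF p f v) (getF p f) = f.
Proof.
case: f => P L; rewrite /updF /getF /=; congr pair; apply/ffunP => q; rewrite !ffunE;
  by case: eqP => [->|].
Qed.

Lemma updF_ne g k m Z p (f : Fty g k m Z) v q : q != p ->
  ((updF p f v).1 q = f.1 q) * ((updF p f v).2 q = f.2 q).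
Proof. by move=> /negbTE h; rewrite /updF /= !ffunE h. Qed.

Lemma updF_eq g k m Z p (f : Fty g k m Z) v :
  ((updF p f v).1 p = v.1) * ((updF p f v).2 p = v.2).
Proof. by rewrite /updF /= !ffunE eqxx. Qed.

Lemma ne_rk g k (e p : 'I_g * 'I_k) : rk e < rk p -> e != p.
Proof. by move=> h; apply/eqP => E; rewrite E ltnn in h. Qed.

Lemma rk_mono g k (i i' : 'I_g) (j j' : 'I_k) : i' <= i -> j' <= j -> rk (i', j') <= rk (i, j).
Proof. by move=> h1 h2; rewrite /rk /= leq_add // leq_mul2r h1 orbT. Qed.

Lemma Hloc g k m Z p q (f : Fty g k m Z) v : rk q < rk p -> bad q (updF p f v) = bad q f.
Proof.
case: q => i j /= hq; rewrite /bad /=.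
apply: eq_existsb => i'; apply: eq_existsb => j'.
case: (ltnP i' i) => //= h1; case: (ltnP j' j) => //= h2.
have n1 : (i', j') != p by apply: ne_rk; apply: leq_ltn_trans hq; apply: rk_mono; lia.
have n2 : (i', j) != p by apply: ne_rk; apply: leq_ltn_trans hq; apply: rk_mono; lia.
have n3 : (i, j') != p by apply: ne_rk; apply: leq_ltn_trans hq; apply: rk_mono; lia.
have n4 : (i, j) != p by apply: ne_rk; apply: leq_ltn_trans hq; apply: rk_mono; lia.
by rewrite /act !(updF_ne _ _ n1) !(updF_ne _ _ n2) !(updF_ne _ _ n3) !(updF_ne _ _ n4).
Qed.

Lemma card_lt_ord g (i : nat) : #|[set i' : 'I_g | i' < i]| <= i.
Proof.
rewrite cardE -(size_map val) -[X in _ <= X](size_iota 0 i); apply: uniq_leq_size.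
  by rewrite (map_inj_uniq val_inj) enum_uniq.
by move=> x /mapP [y]; rewrite mem_enum inE => hy ->; rewrite mem_iota add0n hy.
Qed.

Lemma ord_ltF n (a b : 'I_n) : a < b -> (a == b) = false.
Proof. by move=> h; apply/negbTE; apply/eqP => e; rewrite e ltnn in h. Qed.

Lemma act_uniq g k m Z (f : Fty g k m Z) (i i' : 'I_g) (j j' : 'I_k) v1 v2 :
  i' < i -> j' < j ->
  act (updF (i, j) f v1) i' j' i j -> act (updF (i, j) f v2) i' j' i j -> v1 = v2.
Proof.
move=> h1 h2.
have n1 : (i', j') != (i, j) by rewrite xpair_eqE ord_ltF.
have n2 : (i', j) != (i, j) by rewrite xpair_eqE ord_ltF.
have n3 : (i, j') != (i, j) by rewrite xpair_eqE (ord_ltF h2) andbF.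
rewrite /act !(updF_ne _ _ n1) !(updF_ne _ _ n2) !(updF_ne _ _ n3) !updF_eq.
case: v1 v2 => [a1 l1] [a2 l2] /= /andP [/eqP e1 e1'] /andP [/eqP e2 e2'].
congr pair; apply: val_inj => /=.
  by apply/eqP; rewrite -(eqn_add2l (f.1 (i', j'))) e1 e2.
have : (f.2 (i', j') + l1 == f.2 (i', j') + l2 %[mod Z]).
  by rewrite (eqP e1') (eqP e2').
by rewrite eqn_modDl !modn_small // => /eqP.
Qed.


Lemma HBlem g k m Z (p : 'I_g * 'I_k) (f : Fty g k m Z) :
  #|[set v | bad p (updF p f v)]| <= p.1 * p.2.
Proof.
case: p => i j /=.
set S := [set v | _].
set A := [set i' : 'I_g | i' < i]; set B := [set j' : 'I_k | j' < j].
pose w v := odflt (i, j) [pick ij : 'I_g * 'I_k |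
    [&& ij.1 < i, ij.2 < j & act (updF (i, j) f v) ij.1 ij.2 i j]].
have wP : forall v, v \in S -> [&& (w v).1 < i, (w v).2 < j & act (updF (i, j) f v) (w v).1 (w v).2 i j].
  move=> v; rewrite /w inE /bad /=; case: pickP => [ij H _|H] //=.
  case/existsP => i' /existsP [j' Hj].
  by have := H (i', j'); rewrite /= Hj.
have winj : {in S &, injective w}.
  move=> v1 v2 h1 h2 e.
  have := wP v1 h1; have := wP v2 h2; rewrite -e.
  case/and3P => a1 b1 c1 /and3P [_ _ c2].
  exact: act_uniq a1 b1 c2 c1.
rewrite -(card_in_imset winj).
apply: (leq_trans (subset_leq_card (_ : _ \subset finset.setX A B))).
  apply/fintype.subsetP => x /imsetP [v hv ->]; have /and3P [a b _] := wP v hv.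
  by rewrite inE !inE a b.
by rewrite cardsX leq_mul // card_lt_ord.
Qed.

Lemma act_swap_rows g k m Z (f : Fty g k m Z) i1 j1 i2 j2 :
  act f i2 j1 i1 j2 = act f i1 j1 i2 j2.
Proof.
rewrite /act; congr andb.
  by rewrite eq_sym (addnC (f.1 (i1, j2))) (addnC (f.1 (i2, j2))).
by rewrite eq_sym (addnC (f.2 (i1, j2))) (addnC (f.2 (i2, j2))).
Qed.

Lemma act_swap_cols g k m Z (f : Fty g k m Z) i1 j1 i2 j2 :
  act f i1 j2 i2 j1 = act f i1 j1 i2 j2.
Proof. by rewrite /act; congr andb; rewrite eq_sym. Qed.

Lemma no_bad_no_active g k m Z (P : partmx g k m) (L : liftmx g k Z) :
  [forall p, ~~ bad p (P, L)] -> no_active P L.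
Proof.
move=> /forallP H; apply/forallP => j1; apply/forallP => i1; apply/forallP => j2;
  apply/forallP => i2; apply/negP.
rewrite /active => /and4P [ni nj e1 e2].
have A : act (P, L) i1 j1 i2 j2 by rewrite /act /= e1 e2.
have ni' : (i1 : nat) != i2 by [].
have nj' : (j1 : nat) != j2 by [].
have badp : forall (a a' : 'I_g) (b b' : 'I_k), a' < a -> b' < b -> act (P, L) a' b' a b -> False.
  move=> a a' b b' h1 h2 h3; have := H (a, b); rewrite /bad /= => /negP; apply.
  by apply/existsP; exists a'; apply/existsP; exists b'; rewrite h1 h2 h3.
case: (ltngtP i1 i2) => hi; last by rewrite hi eqxx in ni'.
- case: (ltngtP j1 j2) => hj; last by rewrite hj eqxx in nj'.
  + exact: badp hi hj A.
  + by apply: (badp _ _ _ _ hi hj); rewrite act_swap_cols.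
- case: (ltngtP j1 j2) => hj; last by rewrite hj eqxx in nj'.
  + by apply: (badp _ _ _ _ hi hj); rewrite act_swap_rows.
  + by apply: (badp _ _ _ _ hi hj); rewrite act_swap_rows act_swap_cols.
Qed.


Lemma modD_cancel (Z a b c : nat) : (a + b) %% Z = (a + c) %% Z -> b < Z -> c < Z -> b = c.
Proof.
move=> e hb hc; have h : (a + b == a + c %[mod Z]) by rewrite e.
move: h.
by rewrite eqn_modDl !modn_small // => /eqP.
Qed.

Lemma no_active_girth g k m Z Lc (P : partmx g k m) (L : liftmx g k Z) :
  no_active P L -> girth_ge6 Lc P L.
Proof.
move=> NA [[[r1 i1] z1] [[[r2 i2] z2] [[[t1 j1] w1] [[[t2 j2] w2] [nc nv]]]]].
rewrite /tanner_edge /=.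
move=> /andP [/and3P [a11 /eqP b11 /eqP c11] /and3P [a12 /eqP b12 /eqP c12]].
move=> /andP [/and3P [a21 /eqP b21 /eqP c21] /and3P [a22 /eqP b22 /eqP c22]].
have /forallP/(_ j1)/forallP/(_ i1)/forallP/(_ j2)/forallP/(_ i2) := NA.
apply/negP/negPn; rewrite /active; apply/and4P; split.
- apply/eqP => ei; subst i2.
  have er : r1 = r2 by apply: val_inj => /=; rewrite -(subnK a11) -(subnK a21) b11 b21.
  have ez : z1 = z2.
    apply: val_inj; apply: (@modD_cancel Z (L (i1, j1))); last 2 first.
    - exact: ltn_ord.
    - exact: ltn_ord.
    by rewrite addnC -c11 c21 addnC.
  by move: nc; rewrite er ez eqxx.
- apply/eqP => ej; subst j2.
  have et : t1 = t2 by apply: val_inj => /=; rewrite -(subKn a11) -(subKn a12) b11 b12.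
  have ew : w1 = w2 by apply: val_inj => /=; rewrite c11 c12.
  by move: nv; rewrite et ew eqxx.
- apply/eqP; rewrite -b11 -b22 -b12 -b21; move: a11 a12 a21 a22; clear; lia.
- rewrite -(eqn_modDl (z1 + z2)).
  have -> : z1 + z2 + (L (i1, j1) + L (i2, j2)) = (z1 + L (i1, j1)) + (z2 + L (i2, j2)) by lia.
  have -> : z1 + z2 + (L (i1, j2) + L (i2, j1)) = (z1 + L (i1, j2)) + (z2 + L (i2, j1)) by lia.
  rewrite -modnDm -c11 -c22 -[X in _ == X]modnDm -c12 -c21.
  by rewrite addnC.
Qed.

Local Open Scope ring_scope.

Lemma frac_le (R : realType) (a d c e : nat) : (0 < d)%N -> (0 < e)%N ->
  (a%:R / d%:R <= c%:R / e%:R :> R) = (a * e <= c * d)%N.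
Proof.
move=> hd he.
by rewrite ler_pdivrMr ?ltr0n // mulrAC ler_pdivlMr ?ltr0n // -!natrM ler_nat.
Qed.

Lemma factor_exp (R : realType) (b s : nat) : (b < s)%N ->
  expR (- (b%:R : R)) <= 1 - b%:R / s%:R.
Proof.
move=> hbs.
have s0 : (0 < s)%N by apply: leq_ltn_trans hbs.
rewrite expRN.
apply: (@le_trans _ _ ((1 + b%:R)^-1)).
  rewrite lef_pV2 ?posrE ?expR_gt0 ?expR_ge1Dx //; rewrite -natr1 ltr0n addn1 //.
have -> : (1 : R) - b%:R / s%:R = (s - b)%:R / s%:R.
  have hb : (b <= s)%N by exact: ltnW.
  by rewrite natrB // mulrBl divff // pnatr_eq0 -lt0n.
have -> : (1 + b%:R : R)^-1 = 1%:R / (1 + b)%:R by rewrite natrD mul1r.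
rewrite frac_le //; nia.
Qed.

Lemma sum_ord_id n : ((\sum_(i < n) i) * 2 = n * (n - 1))%N.
Proof.
elim: n => [|n IH]; first by rewrite big_ord0.
rewrite big_ord_recr /= mulnDl IH; nia.
Qed.

Lemma sum_prod_id g k :
  ((\sum_(p : 'I_g * 'I_k) p.1 * p.2) * 4 = g * (g - 1) * (k * (k - 1)))%N.
Proof.
rewrite -(pair_bigA _ (fun (i : 'I_g) (j : 'I_k) => (i * j)%N)) /=.
have -> : (\sum_(i < g) \sum_(j < k) i * j = (\sum_(i < g) i) * (\sum_(j < k) j))%N.
  rewrite big_distrl /=; apply: eq_bigr => i _; by rewrite big_distrr.
rewrite -sum_ord_id -sum_ord_id; nia.
Qed.

Lemma caseI_bound (R : realType) (g k s D : nat) : (3 <= D)%N ->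
  (forall p : 'I_g * 'I_k, p.1 * p.2 < s)%N ->
  (1 - 2 / D%:R) `^ ((g * (g - 1) * k * (k - 1) * D)%N%:R / 8)
    <= \prod_(p : 'I_g * 'I_k) (1 - (p.1 * p.2)%N%:R / (s%:R : R)).
Proof.
move=> hD hb.
apply: (@le_trans _ _ (\prod_(p : 'I_g * 'I_k) expR (- ((p.1 * p.2)%N%:R : R)))); last first.
  by apply: ler_prod => p _; rewrite expR_ge0 factor_exp.
rewrite -expR_sum sumrN -natr_sum.
set S := (\sum_(p : 'I_g * 'I_k) p.1 * p.2)%N.
have Dp : (0 < D)%N by apply: leq_trans hD.
have D0 : (D%:R : R) != 0 by rewrite pnatr_eq0 -lt0n.
have a0 : (1 - 2 / D%:R : R) != 0.
  rewrite subr_eq0 eq_sym; apply/negP => /eqP e.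
  have : (2 : R) = D%:R by rewrite -[LHS](divfK D0) e mul1r.
  by move/eqP; rewrite -[2]/(2%:R) eqr_nat => /eqP e2; rewrite -e2 in hD.
rewrite /powR (negbTE a0) ler_expR.
have hln : ln (1 - 2 / (D%:R : R)) <= - (2 / D%:R).
  apply: le_ln1Dx.
  rewrite ltrNl opprK ltr_pdivrMr ?ltr0n // mul1r.
  by rewrite -[2]/(2%:R) ltr_nat.
apply: (@le_trans _ _ ((g * (g - 1) * k * (k - 1) * D)%N%:R / 8 * (- (2 / D%:R)))).
  by apply: ler_wpM2l => //; apply: divr_ge0.
have eS : (g * (g - 1) * k * (k - 1) * D = (S * 4) * D)%N.
  by rewrite sum_prod_id !mulnA.
rewrite eS natrM natrM.
rewrite [X in X <= _](_ : _ = - (S%:R : R)) ?lexx //.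
by field.
Qed.

Lemma caseII_bound (R : realType) (g k s x : nat) : (0 < x)%N -> (4 * x <= s)%N ->
  (forall p : 'I_g * 'I_k, p.1 * p.2 <= x + 1)%N ->
  (1 - (x + 1)%N%:R / (4 * x%:R)) ^+ (g * k)
    <= \prod_(p : 'I_g * 'I_k) (1 - (p.1 * p.2)%N%:R / (s%:R : R)).
Proof.
move=> hx hs hb.
have -> : (g * k = #|{: 'I_g * 'I_k}|)%N by rewrite card_prod !card_ord.
rewrite -prodr_const; apply: ler_prod => p _; apply/andP; split.
  rewrite subr_ge0 -(natrM R 4 x) ler_pdivrMr ?ltr0n ?muln_gt0 // mul1r ler_nat; lia.
rewrite lerD2l lerN2 -(natrM R 4 x) frac_le ?muln_gt0 //; last by lia.
by apply: leq_mul (hb p) hs.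
Qed.

Lemma termI_le (R : realType) g k : (0 < Delta g k)%N ->
  termI R g k <= (1%N)%:R / (Delta g k)%:R.
Proof.
rewrite /termI; case: (Delta g k) => [//|n] _ /=.
rewrite -!natrX frac_le ?expn_gt0 //.
rewrite mul1n expnS mulnC leq_mul2l /=.
by case: n => [//|n]; rewrite leq_exp2r.
Qed.

Lemma gk_facts g k : (2 <= g)%N -> (2 <= k)%N -> ~~ ((g == 2%N) && (k == 2%N)) ->
  [/\ (0 < g * k - g - k)%N, (g * k - g - k + 1 = (g - 1) * (k - 1))%N,
      (3 <= Delta g k)%N & (3 * (g * k - g - k + 1) <= 2 * Delta g k)%N].
Proof.
rewrite /Delta; case: g => [|[|a]] //; case: k => [|[|b]] //= _ _ hab.
have hab' : (1 <= a + b)%N by case: a b hab => [|a] [|b].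
split; nia.
Qed.

Lemma main_count (R : realType) (g k m Z : nat) : (0 < Z)%N ->
  (forall p : 'I_g * 'I_k, p.1 * p.2 < m.+1 * Z)%N ->
  \prod_(p : 'I_g * 'I_k) (1 - (p.1 * p.2)%N%:R / ((m.+1 * Z)%N%:R : R))
     <= prob_no_active R g k m Z /\
  exists (P : partmx g k m) (Lf : liftmx g k Z), no_active P Lf.
Proof.
move=> hZ hb.
set s := (m.+1 * Z)%N.
have G := @greedy ('I_g * 'I_k)%type (Fty g k m Z) ('I_m.+1 * 'I_Z)%type (@rk g k) (@rk_inj g k)
  (@updF g k m Z) (@getF g k m Z) (@getF_upd g k m Z) (@updF_get g k m Z)
  (@bad g k m Z) (fun p => p.1 * p.2)%N (@Hloc g k m Z) (@HBlem g k m Z).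
have eV : #|{: 'I_m.+1 * 'I_Z}| = s by rewrite card_prod !card_ord.
rewrite eV in G.
set Gs := [set f | [forall p, ~~ bad p f]] in G.
have F0 : (0 < #|{: Fty g k m Z}|)%N.
  apply/card_gt0P; exists ([ffun _ => ord0], [ffun _ => Ordinal hZ]); by rewrite inE.
have GNA : (#|Gs| <= #|[set PL : partmx g k m * liftmx g k Z | no_active PL.1 PL.2]|)%N.
  apply: subset_leq_card; apply/fintype.subsetP => f; rewrite !inE.
  by case: f => P L /= H; exact: no_bad_no_active H.
have s0 : (0 < s)%N by rewrite muln_gt0 hZ.
have Gpos : (0 < #|Gs|)%N.
  have h1 : (0 < \prod_(p : 'I_g * 'I_k) (s - p.1 * p.2) * #|{: Fty g k m Z}|)%N.
    by rewrite muln_gt0 F0 andbT prodn_gt0 // => p; rewrite subn_gt0 hb.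
  by move: (leq_trans h1 G); rewrite muln_gt0 => /andP [_ ->].
split.
- rewrite /prob_no_active.
  apply: (@le_trans _ _ (#|Gs|%:R / #|{: Fty g k m Z}|%:R)); last first.
    by rewrite frac_le // leq_mul2r GNA orbT.
  have -> : \prod_(p : 'I_g * 'I_k) (1 - (p.1 * p.2)%N%:R / (s%:R : R)) =
            \prod_(p : 'I_g * 'I_k) ((s - p.1 * p.2)%N%:R / (s%:R : R)).
    apply: eq_bigr => p _; have hp := ltnW (hb p).
    by rewrite natrB // mulrBl divff // pnatr_eq0 -lt0n.
  rewrite prodf_div -!natr_prod prod_nat_const frac_le; first last.
  - exact: F0.
  - by rewrite expn_gt0 s0.
  by rewrite [X in (_ <= X)%N]mulnC.
- have /card_gt0P [f] := Gpos; rewrite inE => Hf.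
  exists f.1, f.2; apply: no_bad_no_active.
  by case: f Hf.
Qed.


Unset Implicit Arguments.

Theorem corollary1 (R : realType) (g k m Lc Z : nat) :
  (2 <= g)%N -> (2 <= k)%N -> ~~ ((g == 2%N) && (k == 2%N)) ->
  (m.+1 <= Lc)%N -> (1 <= Z)%N ->
  (2 * m ^ 2 + 4 * m + 3)%N%:R / (3 * (m.+1 ^ 3)%N%:R * Z%:R)
    <= Num.max (termI R g k) (termII R g k) ->
  lower_bound R g k <= prob_no_active R g k m Z /\
  exists (P : partmx g k m) (Lf : liftmx g k Z),
    no_active P Lf /\ @girth_ge6 g k m Z Lc P Lf.
Proof.
move=> hg hk hgk hL hZ H.
have [x0 ex D3 xD] := gk_facts hg hk hgk.
have Dpos : (0 < Delta g k)%N by apply: leq_trans D3.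
set x := (g * k - g - k)%N in x0 ex xD.
set s := (m.+1 * Z)%N.
have hbx : forall p : 'I_g * 'I_k, (p.1 * p.2 <= x + 1)%N.
  move=> [i j] /=; rewrite ex.
  have hi : (i <= g - 1)%N by have := ltn_ord i; lia.
  have hj : (j <= k - 1)%N by have := ltn_ord j; lia.
  exact: leq_mul.
set u := (m.+1 ^ 2)%N.
have u0 : (0 < u)%N by rewrite expn_gt0.
have eA : (2 * m ^ 2 + 4 * m + 3 = 2 * u + 1)%N by rewrite /u !expnS !expn0 !muln1; nia.
have e3 : (3 * m.+1 ^ 3 * Z = 3 * u * s)%N by rewrite /u /s expnSr !mulnA.
rewrite -!natrM in H.
have den0 : (0 < 3 * m.+1 ^ 3 * Z)%N by rewrite !muln_gt0 ?expn_gt0 ?hZ.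
have exi : forall s', (forall p : 'I_g * 'I_k, p.1 * p.2 < s')%N -> s' = s ->
    exists (P : partmx g k m) (Lf : liftmx g k Z),
    no_active P Lf /\ @girth_ge6 g k m Z Lc P Lf.
  move=> s' hb es; subst s'.
  have [_ [P [Lf NA]]] := @main_count R g k m Z hZ hb.
  by exists P, Lf; split => //; apply: no_active_girth.
have [hc|hc] := ltP (termII R g k) (termI R g k).
- rewrite max_l in H; last exact: ltW hc.
  have H2 := le_trans H (@termI_le R g k Dpos).
  rewrite frac_le // eA e3 mul1n in H2.
  have h2D : (2 * Delta g k < 3 * s)%N.
    rewrite ltnNge; apply/negP => c.
    have c2 := leq_mul (leqnn u) c.
    move: H2 c2 D3; clear; lia.
  have hs : (x + 1 < s)%N by move: h2D xD; clear; lia.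
  have hb : forall p : 'I_g * 'I_k, (p.1 * p.2 < s)%N.
    by move=> p; apply: leq_ltn_trans (hbx p) hs.
  split; last exact: exi hb erefl.
  rewrite /lower_bound hc.
  apply: le_trans (@caseI_bound R g k s (Delta g k) D3 hb) _.
  exact: (proj1 (@main_count R g k m Z hZ hb)).
- rewrite max_r in H; last exact: hc.
  rewrite /termII -natrM -/x frac_le ?muln_gt0 // eA e3 in H.
  have h4 : (4 * x <= s)%N.
    rewrite leqNgt; apply/negP => c.
    have c2 := leq_mul (leqnn u) c.
    move: H c2 x0 u0; clear; lia.
  have hs : (x + 1 < s)%N by move: h4 x0; clear; lia.
  have hb : forall p : 'I_g * 'I_k, (p.1 * p.2 < s)%N.
    by move=> p; apply: leq_ltn_trans (hbx p) hs.
  split; last exact: exi hb erefl.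
  rewrite /lower_bound ltNge hc /=.
  apply: le_trans (@caseII_bound R g k s x x0 h4 hbx) _.
  exact: (proj1 (@main_count R g k m Z hZ hb)).
Qed.
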